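(* Let $f:[\frac13,2]\to[\frac13,2]$ be defined by $f(x)=2x$ if $x\in[\frac13,1)$ and $f(x)=\frac{x}{3}$ if $x\in[1,2]$. Then for every $x\in[\frac13,2]$ the orbit $\{f^n(x): n\ge 0\}$ is dense in $[\frac13,2]$. *)

(* Defs.v *)
From Stdlib Require Import Reals.
Open Scope R_scope.

(* The map f on [1/3,2]: f x = 2x on [1/3,1), f x = x/3 on [1,2].
   It is defined on all of R as a total function; only its values on
   [1/3,2] matter (it maps [1/3,2] into itself). *)
Definition f (x : R) : R :=
  if Rlt_dec x 1 then 2 * x else x / 3.

Fixpoint f_iter (n : nat) (x : R) : R :=
  match n with
  | O => x
  | S m => f (f_iter m x)
  end.

(* Main.v *)
Require Import Defs.
From Stdlib Require Import Reals Lra Lia Classical.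
Open Scope R_scope.

Lemma ln_le_mono : forall a b, 0 < a -> a <= b -> ln a <= ln b.
Proof. intros a b Ha Hab. destruct (Req_dec a b) as [->|H]; [lra|].
  left; apply ln_increasing; lra. Qed.

Lemma ln2_pos : 0 < ln 2.
Proof. rewrite <- ln_1. apply ln_increasing; lra. Qed.
Lemma ln3_pos : 0 < ln 3.
Proof. rewrite <- ln_1. apply ln_increasing; lra. Qed.
Lemma ln6_eq : ln 6 = ln 2 + ln 3.
Proof. rewrite <- ln_mult by lra. f_equal; lra. Qed.
Lemma ln13 : ln (1/3) = - ln 3.
Proof. unfold Rdiv; rewrite Rmult_1_l, ln_Rinv; lra. Qed.

Lemma orbit_form : forall x, 1/3 <= x <= 2 -> forall n,
  1/3 <= f_iter n x <= 2 /\
  exists k : Z, ln (f_iter n x) = ln x + INR n * ln 2 - IZR k * ln 6.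
Proof.
  intros x Hx n; induction n as [|n [Hb [k Hk]]].
  - simpl. split; [lra|]. exists 0%Z. simpl. ring.
  - simpl f_iter. set (z := f_iter n x) in *. unfold Defs.f.
    destruct (Rlt_dec z 1) as [Hl|Hl].
    + split; [lra|]. exists k. rewrite ln_mult by lra. rewrite S_INR, Hk. ring.
    + split; [lra|]. exists (k+1)%Z. unfold Rdiv. rewrite ln_mult by lra.
      rewrite ln_Rinv by lra. rewrite S_INR, Hk, plus_IZR, ln6_eq. ring.
Qed.

Lemma exp_lip : forall t s, t <= ln 2 -> s <= ln 2 -> Rabs (exp t - exp s) <= 2 * Rabs (t - s).
Proof.
  assert (H: forall t s, s <= t -> t <= ln 2 -> exp t - exp s <= 2 * (t - s)).
  { intros t s Hst Ht. 
    assert (E: exp s = exp t * exp (-(t-s))) by (rewrite <- exp_plus; f_equal; ring).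
    pose proof (exp_ineq1_le (-(t-s))).
    assert (exp t <= 2). { rewrite <- (exp_ln 2) by lra. destruct Ht as [Ht|Ht]; [left; apply exp_increasing; lra| rewrite Ht; lra]. }
    pose proof (exp_pos t). rewrite E. nra. }
  intros t s Ht Hs. destruct (Rle_dec s t).
  - pose proof (H t s r Ht). pose proof (exp_increasing s t). 
    rewrite (Rabs_pos_eq (t-s)) by lra. destruct r as [r|r].
    + rewrite Rabs_pos_eq; [lra|]. specialize (H1 r); lra.
    + subst; rewrite Rminus_diag, Rabs_R0; lra.
  - pose proof (H s t ltac:(lra) Hs). pose proof (exp_increasing t s ltac:(lra)).
    rewrite Rabs_left by lra. rewrite Rabs_left by lra. lra.
Qed.

Lemma floor_nat : forall D g, 0 <= D -> 0 < g -> exists j : nat, 0 <= D - INR j * g < g.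
Proof.
  intros D g HD Hg. destruct (archimed (D/g)) as [H1 H2].
  assert (Hq : 0 <= D / g) by (unfold Rdiv; apply Rmult_le_pos; [lra| left; apply Rinv_0_lt_compat; lra]).
  assert (Hu : (0 < up (D/g))%Z) by (apply lt_IZR; lra).
  exists (Z.to_nat (up (D/g) - 1)).
  rewrite INR_IZR_INZ, Znat.Z2Nat.id by lia. rewrite minus_IZR.
  assert (E: D = (D/g) * g) by (field; lra).
  split; rewrite E at 1; nra.
Qed.
Lemma pow2_mod3 : forall l, exists q, (2^l = 3*q+1 \/ 2^l = 3*q+2)%nat.
Proof. induction l as [|l [q [H|H]]].
  - exists 0%nat; simpl; lia.
  - exists (2*q)%nat; simpl; lia.
  - exists (2*q+1)%nat; simpl; lia.
Qed.

Lemma irr : forall a l : Z, (0<a)%Z -> (0<l)%Z -> IZR l * ln 2 <> IZR a * ln 6.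
Proof.
  intros a l Ha Hl E.
  assert (Ea : IZR a = INR (Z.to_nat a)) by (rewrite INR_IZR_INZ, Znat.Z2Nat.id; [reflexivity|lia]).
  assert (El : IZR l = INR (Z.to_nat l)) by (rewrite INR_IZR_INZ, Znat.Z2Nat.id; [reflexivity|lia]).
  rewrite Ea, El in E. rewrite <- !ln_pow in E by lra.
  apply ln_inv in E; try (apply pow_lt; lra).
  assert (E2 : INR (2 ^ Z.to_nat l) = INR (6 ^ Z.to_nat a)).
  { rewrite !pow_INR. replace (INR 2) with 2 by (simpl; lra). replace (INR 6) with 6 by (simpl; lra). exact E. }
  apply INR_eq in E2. destruct (pow2_mod3 (Z.to_nat l)) as [q Hq].
  destruct (Z.to_nat a) as [|m] eqn:Hm; [lia|]. simpl in E2. lia.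
Qed.

Definition HH (h : R) := exists N k : Z, h = IZR N * ln 2 - IZR k * ln 6.

Lemma HH_sub : forall a b, HH a -> HH b -> HH (a - b).
Proof. intros a b [N [k ->]] [N' [k' ->]]. exists (N-N')%Z, (k-k')%Z.
  rewrite !minus_IZR. ring. Qed.

Lemma HH_mul : forall a z, HH a -> HH (IZR z * a).
Proof. intros a z [N [k ->]]. exists (z*N)%Z, (z*k)%Z. rewrite !mult_IZR. ring. Qed.

Lemma small_elem : forall d, 0 < d -> exists h, HH h /\ 0 < h < d.
Proof.
  set (E := fun z => exists h, HH h /\ 0 < h /\ z = - h).
  assert (Hb : bound E) by (exists 0; intros z [h [_ [Hh ->]]]; lra).
  assert (Hne : exists z, E z).
  { exists (- ln 2). exists (ln 2). split; [|split; [apply ln2_pos|reflexivity]].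
    exists 1%Z, 0%Z. ring. }
  destruct (completeness E Hb Hne) as [m [Hub Hlub]].
  set (g := - m).
  assert (Glow : forall h, HH h -> 0 < h -> g <= h).
  { intros h Hh Hp. assert (- h <= m) by (apply Hub; exists h; auto). unfold g; lra. }
  assert (Gnn : 0 <= g).
  { assert (m <= 0) by (apply Hlub; intros z [h [_ [Hh ->]]]; lra). unfold g; lra. }
  assert (Gapp : forall c, g < c -> exists h, HH h /\ 0 < h /\ h < c).
  { intros c Hc. apply NNPP; intro Hn.
    assert (m <= - c).
    { apply Hlub. intros z [h [Hh [Hp ->]]].
      destruct (Rlt_le_dec h c) as [Hlt|Hle]; [exfalso; apply Hn; exists h; auto | lra]. }
    unfold g in Hc; lra. }
  destruct (Req_dec g 0) as [G0|G0].
  - intros d Hd. destruct (Gapp d ltac:(lra)) as [h [Hh [Hp Hlt]]]. exists h; auto.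
  - exfalso. assert (Gp : 0 < g) by lra.
    assert (Gin : HH g).
    { destruct (Gapp (2*g) ltac:(lra)) as [h1 [H1 [P1 L1]]].
      destruct (Req_dec h1 g) as [->|Ne]; [exact H1|].
      pose proof (Glow h1 H1 P1).
      destruct (Gapp h1 ltac:(lra)) as [h2 [H2 [P2 L2]]].
      pose proof (Glow h2 H2 P2).
      pose proof (Glow (h1 - h2) (HH_sub _ _ H1 H2) ltac:(lra)). lra. }
    assert (Mult : forall h, HH h -> exists z : Z, h = IZR z * g).
    { intros h Hh. destruct (archimed (h/g)) as [A1 A2].
      exists (up (h/g) - 1)%Z.
      assert (Hr : HH (h - IZR (up (h/g) - 1) * g)) by (apply HH_sub; [exact Hh| apply HH_mul; exact Gin]).
      rewrite minus_IZR in *.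
      assert (E1 : h = (h/g) * g) by (field; lra).
      set (q := h/g) in *. clearbody q. set (U := IZR (up q)) in *. clearbody U.
      destruct (Rle_lt_dec (h - (U - 1) * g) 0) as [Hle|Hlt].
      + subst h. nra.
      + pose proof (Glow _ Hr Hlt). subst h. nra. }
    destruct (Mult (ln 2)) as [a Ea]; [exists 1%Z, 0%Z; ring|].
    destruct (Mult (ln 6)) as [l El]; [exists 0%Z, (-1)%Z; ring|].
    pose proof ln2_pos. pose proof ln3_pos. pose proof ln6_eq.
    assert (0 < IZR a) by nra. assert (0 < IZR l) by nra.
    apply (irr a l); try (apply lt_IZR; lra).
    rewrite Ea, El. ring.
Qed.

Lemma wrap : forall T s2 d err c, - ln 3 <= T <= ln 2 -> - ln 3 + d <= s2 <= ln 2 - d ->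
  Rabs err < d -> T - s2 = err + IZR c * ln 6 -> Rabs (T - s2) < d.
Proof.
  intros T s2 d err c HT Hs He Eq. apply Rabs_def2 in He.
  pose proof ln6_eq. pose proof ln2_pos. pose proof ln3_pos.
  destruct (Z.lt_trichotomy c 0) as [Hc|[Hc|Hc]].
  - assert (IZR c <= -1) by (apply IZR_le; lia). exfalso. nra.
  - subst c. rewrite Rmult_0_l, Rplus_0_r in Eq. rewrite Eq. apply Rabs_def1; lra.
  - assert (1 <= IZR c) by (apply IZR_le; lia). exfalso. nra.
Qed.

Theorem mainTheorem2 :
  forall x : R, 1/3 <= x <= 2 ->
  forall y : R, 1/3 <= y <= 2 ->
  forall eps : R, 0 < eps ->
  exists n : nat, Rabs (f_iter n x - y) < eps.
Proof.
  intros x Hx y Hy eps Heps.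
  pose proof ln6_eq as L6. pose proof ln2_pos as P2. pose proof ln3_pos as P3.
  set (d := Rmin (eps/5) (ln 2 / 2)).
  assert (Hd1 : d <= eps/5) by apply Rmin_l.
  assert (Hd2 : d <= ln 2 / 2) by apply Rmin_r.
  assert (Hd0 : 0 < d) by (apply Rmin_glb_lt; lra).
  assert (Bx : - ln 3 <= ln x <= ln 2).
  { rewrite <- ln13. split; apply ln_le_mono; lra. }
  assert (By : - ln 3 <= ln y <= ln 2).
  { rewrite <- ln13. split; apply ln_le_mono; lra. }
  assert (Cl : exists s2, - ln 3 + d <= s2 <= ln 2 - d /\ Rabs (ln y - s2) <= d).
  { destruct (Rle_dec (ln y) (- ln 3 + d)).
    - exists (- ln 3 + d). split; [lra|]. apply Rabs_le; lra.
    - destruct (Rle_dec (ln y) (ln 2 - d)).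
      + exists (ln y). split; [lra|]. rewrite Rminus_diag, Rabs_R0; lra.
      + exists (ln 2 - d). split; [lra|]. apply Rabs_le; lra. }
  destruct Cl as [s2 [Hs2 Hys]].
  destruct (small_elem (Rmin d (ln 6))) as [h [[N [k Eh]] [Hh0 Hh1]]].
  { apply Rmin_glb_lt; lra. }
  assert (Hhd : h < d) by (eapply Rlt_le_trans; [exact Hh1| apply Rmin_l]).
  assert (Hh6 : h < ln 6) by (eapply Rlt_le_trans; [exact Hh1| apply Rmin_r]).
  assert (NZ : N <> 0%Z).
  { intro; subst N. rewrite Rmult_0_l in Eh.
    assert (0 < - IZR k) by nra. assert (- IZR k < 1) by nra.
    rewrite <- opp_IZR in *. apply lt_IZR in H. apply lt_IZR in H0. lia. }
  assert (Beta : exists (Nn : nat) (kk : Z) beta, beta = INR Nn * ln 2 - IZR kk * ln 6 /\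
                   0 < Rabs beta < d).
  { destruct (Z.lt_trichotomy N 0) as [Hn|[Hn|Hn]]; [|lia|].
    - exists (Z.to_nat (- N)), (- k)%Z, (- h). split.
      + rewrite INR_IZR_INZ, Znat.Z2Nat.id by lia. rewrite !opp_IZR, Eh. ring.
      + rewrite Rabs_Ropp, Rabs_pos_eq; lra.
    - exists (Z.to_nat N), k, h. split.
      + rewrite INR_IZR_INZ, Znat.Z2Nat.id by lia. exact Eh.
      + rewrite Rabs_pos_eq; lra. }
  destruct Beta as [Nn [kk [beta [Eb Hb]]]].
  assert (Main : exists (n : nat) (c : Z) err, Rabs err < d /\
                   ln (f_iter n x) - s2 = err + IZR c * ln 6).
  { destruct (Rlt_le_dec 0 beta) as [Bp|Bn].
    - rewrite Rabs_pos_eq in Hb by lra.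
      destruct (floor_nat (s2 + ln 6 - ln x) beta ltac:(lra) Bp) as [j Hj].
      destruct (orbit_form x Hx (j * Nn)) as [_ [kn Hkn]].
      exists (j * Nn)%nat, (1 + Z.of_nat j * kk - kn)%Z,
        (- (s2 + ln 6 - ln x - INR j * beta)).
      split.
      + rewrite Rabs_Ropp, Rabs_pos_eq; lra.
      + rewrite Hkn, mult_INR, minus_IZR, plus_IZR, mult_IZR, <- INR_IZR_INZ, Eb. ring.
    - assert (beta <> 0) by (intro Z0; rewrite Z0, Rabs_R0 in Hb; lra).
      rewrite Rabs_left in Hb by lra.
      destruct (floor_nat (ln x - (s2 - ln 6)) (- beta) ltac:(lra) ltac:(lra)) as [j Hj].
      destruct (orbit_form x Hx (j * Nn)) as [_ [kn Hkn]].
      exists (j * Nn)%nat, (-1 + Z.of_nat j * kk - kn)%Z,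
        (ln x - (s2 - ln 6) - INR j * (- beta)).
      split.
      + rewrite Rabs_pos_eq; lra.
      + rewrite Hkn, mult_INR, minus_IZR, plus_IZR, mult_IZR, <- INR_IZR_INZ, Eb. ring. }
  destruct Main as [n [c [err [Herr Eq]]]].
  exists n.
  destruct (orbit_form x Hx n) as [Bn _].
  assert (BT : - ln 3 <= ln (f_iter n x) <= ln 2).
  { rewrite <- ln13. split; apply ln_le_mono; lra. }
  pose proof (wrap _ _ _ _ _ BT Hs2 Herr Eq) as W.
  rewrite <- (exp_ln (f_iter n x)) by lra. rewrite <- (exp_ln y) by lra.
  eapply Rle_lt_trans; [apply exp_lip; lra|].
  apply Rabs_def2 in W. pose proof (Rle_abs (ln y - s2)) as Y1; pose proof (Rle_abs (-(ln y - s2))) as Y2; rewrite Rabs_Ropp in Y2.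
  assert (Rabs (ln (f_iter n x) - ln y) < 2 * d) by (apply Rabs_def1; lra).
  lra.
Qed.
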